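(* Let $k\ge 2$, $c\ge 1$, $s\ge t\ge 2$ be integers, let $G_{r_s}$ be a connected $k$-uniform rooted hypergraph with root $r_s$, and let $H=G_c(s,t)$ with $\mathbf{x}=\mathbf{x}(H)$. Then $\sigma(V'(H^{u_s}))+x_{u_s}>\sigma(V'(H_{u_{s+1}}))+x_{u_{s+1}}$ and $\sigma(V'(H^{u_s}))\ge \sigma(V'(H_{u_s}))$.
   Context: Hypergraphs are $k$-uniform (every edge has $k$ vertices); for a connected hypergraph $G$, $d_G(u,v)$ is the length of a shortest path, $D(G)=(d_G(u,v))$, $\rho(G)$ is the largest eigenvalue of $D(G)$, and $\mathbf{x}(G)$ is the unique positive unit eigenvector of $D(G)$ for $\rho(G)$; $x_v$ is its entry at $v$ and $\sigma(X)$ the sum of its entries over $X\subseteq V(G)$. The loose path $P^k_{s+t}=(u_0,e_1,u_1,\dots,e_{s+t},u_{s+t})$ is the $k$-uniform hypertree with $s+t$ edges in which $u_1,\dots,u_{s+t-1}$ have degree $2$ and all other vertices degree $1$. $S^k_c$ is the $k$-uniform hyperstar with $c$ edges sharing a common center. $G_c(s,t)$ is obtained from $P^k_{s+t}$ by identifying, for each $i\in\{1,\dots,s+t-1\}\setminus\{s\}$, the center of a disjoint copy of $S^k_c$ with $u_i$, and identifying the root $r_s$ of a disjoint copy of $G_{r_s}$ with $u_s$. For $0\le i\le s+t$, $G_{u_i}$ denotes the subhypergraph consisting of $u_i$ together with the hypergraph attached at $u_i$ (just $\{u_i\}$ if nothing is attached). For an edge $e$, $H-e$ is the hypergraph with the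 same vertices and edge $e$ removed. $H^{u_i}$ is the connected component of $H-e_{i+1}$ containing $u_0$, and $H_{u_i}$ is the connected component of $H-e_i$ containing $u_{s+t}$; $V'(H^{u_i})=V(H^{u_i})\setminus V(G_{u_i})$ and $V'(H_{u_i})=V(H_{u_i})\setminus V(G_{u_i})$. *)

(* Defs.v *)
From HB Require Import structures.
From mathcomp Require Import all_boot all_order all_algebra.
Set Implicit Arguments. Unset Strict Implicit. Unset Printing Implicit Defensive.
Import Order.TTheory GRing.Theory Num.Theory.

Section Hyper.
Variable T : finType.

Definition adj (E : {set {set T}}) : rel T :=
  fun x y => [exists e in E, (x \in e) && (y \in e)].

Definition uniform (k : nat) (E : {set {set T}}) : Prop :=
  forall e, e \in E -> #|e| = k.

Definition hconnected (V : {set T}) (E : {set {set T}}) : Prop :=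
  forall x y, x \in V -> y \in V -> connect (adj E) x y.

Fixpoint nstep (E : {set {set T}}) (u v : T) (m : nat) : bool :=
  match m with
  | 0 => u == v
  | m'.+1 => [exists w, adj E u w && nstep E w v m']
  end.

Definition dist (E : {set {set T}}) (u v : T) : nat :=
  \big[minn/#|T|]_(m < #|T|.+1 | nstep E u v m) m.

Definition component (E : {set {set T}}) (u : T) : {set T} :=
  [set v | connect (adj E) u v].

Variable R : rcfType.
Local Open Scope ring_scope.

Definition dist_eigen_eq (V : {set T}) (E : {set {set T}}) (lam : R)
  (y : T -> R) : Prop :=
  forall v, v \in V -> \sum_(w in V) (dist E v w)%:R * y w = lam * y v.

Definition dist_eigenvalue (V : {set T}) (E : {set {set T}}) (lam : R) : Prop :=
  exists y : T -> R, (exists2 v, v \in V & y v != 0) /\ dist_eigen_eq V E lam y.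

Definition dist_spectral_radius (V : {set T}) (E : {set {set T}}) (rho : R) :=
  dist_eigenvalue V E rho /\ forall lam, dist_eigenvalue V E lam -> lam <= rho.

Definition perron_vector (V : {set T}) (E : {set {set T}}) (x : T -> R) :=
  exists rho, [/\ dist_spectral_radius V E rho, dist_eigen_eq V E rho x,
                  (forall v, v \in V -> 0 < x v) &
                  \sum_(v in V) x v ^+ 2 = 1].

Definition sigma (x : T -> R) (X : {set T}) : R := \sum_(v in X) x v.
End Hyper.

(* Carrier type: path vertices u_0..u_n (n = s+t), the k-2 inner       *)
(* vertices (i,j) of each path edge e_(i+1), i < n (index n unused),  *)
(* the k-1 non-center vertices of each of  *)
(* the c edges of the hyperstar attached at u_i, and the vertices of   *)
(* G_{r_s} (with r_s identified with u_s).                              *)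
Section Construction.
Variables (k c s t : nat) (W : finType) (EG : {set {set W}}) (r : W).

Definition carrier : finType :=
  (('I_(s + t).+1 + ('I_(s + t).+1 * 'I_(k - 2))) +
   (('I_(s + t).+1 * 'I_c * 'I_(k - 1)) + W))%type.

Definition uu (i : nat) : carrier := inl (inl (@inord (s + t) i)).

(* indices carrying a hyperstar: {1,...,s+t-1} \ {s} *)
Definition star_ok (i : nat) : bool := [&& 0 < i, i < s + t & i != s].

Definition valid (x : carrier) : bool :=
  match x with
  | inl (inl _) => true
  | inl (inr (i, _)) => (i < s + t)%N
  | inr (inl (i, _, _)) => star_ok i
  | inr (inr w) => w != r
  end.

Definition VH : {set carrier} := [set x | valid x].

Definition pedge (m : nat) : {set carrier} :=
  [set uu m.-1; uu m] :|:
  [set (inl (inr (@inord (s + t) m.-1, j)) : carrier) | j : 'I_(k - 2)].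


Definition sedge (i : 'I_(s + t).+1) (a : 'I_c) : {set carrier} :=
  [set uu i] :|: [set (inr (inl (i, a, b)) : carrier) | b : 'I_(k - 1)].

Definition emb (w : W) : carrier := if w == r then uu s else inr (inr w).

Definition EH : {set {set carrier}} :=
  [set pedge i.+1 | i : 'I_(s + t)] :|:
  [set sedge ia.1 ia.2 | ia in [set ia : 'I_(s + t).+1 * 'I_c | star_ok ia.1]] :|:
  [set emb @: e | e : {set W} in EG].

(* V(G_{u_i}): u_i together with the hypergraph attached at u_i *)
Definition Gat (i : nat) : {set carrier} :=
  if i == s then emb @: [set: W]
  else if star_ok i then
    [set uu i] :|: [set (inr (inl (@inord (s + t) i, a, b)) : carrier)
                     | a : 'I_c, b : 'I_(k - 1)]
  else [set uu i].

(* H^{u_i}: component of H - e_{i+1} containing u_0 *)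
Definition Hup (i : nat) : {set carrier} := component (EH :\ pedge i.+1) (uu 0).
(* H_{u_i}: component of H - e_i containing u_{s+t} *)
Definition Hdown (i : nat) : {set carrier} := component (EH :\ pedge i) (uu (s + t)).

Definition Vup' (i : nat) : {set carrier} := Hup i :\: Gat i.
Definition Vdown' (i : nat) : {set carrier} := Hdown i :\: Gat i.
End Construction.

(* Main.v *)
Require Import Defs.
From HB Require Import structures.
From mathcomp Require Import all_boot all_order all_algebra.
From mathcomp Require Import zify ring lra.
Set Implicit Arguments. Unset Strict Implicit. Unset Printing Implicit Defensive.
Import Order.TTheory GRing.Theory Num.Theory.

Section Gen.
Variable T : finType.
Implicit Types (E : {set {set T}}) (u v w a y z : T).

Lemma adj_sym E : symmetric (adj E).
Proof.
move=> y z; apply/existsP/existsP => [] [e /andP[He /andP[H1 H2]]];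
  by exists e; rewrite He H1 H2.
Qed.

Lemma adjI E e y z : e \in E -> y \in e -> z \in e -> adj E y z.
Proof. by move=> He Hy Hz; apply/existsP; exists e; rewrite He Hy Hz. Qed.

Lemma adjE E y z : adj E y z -> exists e, [/\ e \in E, y \in e & z \in e].
Proof. by case/existsP=> e /andP[He /andP[H1 H2]]; exists e. Qed.

Lemma nstep1 E y z : adj E y z -> nstep E y z 1.
Proof. by move=> H; apply/existsP; exists z; rewrite H /=. Qed.

Lemma nstep_cat E u v w m1 m2 :
  nstep E u v m1 -> nstep E v w m2 -> nstep E u w (m1 + m2).
Proof.
elim: m1 u => [|m1 IH] u /=; first by move/eqP->.
case/existsP=> y /andP[Huy Hy] Hw; apply/existsP; exists y.
by rewrite Huy IH.
Qed.

Lemma nstep_path E u p : path (adj E) u p -> nstep E u (last u p) (size p).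
Proof.
elim: p u => [|y p IH] u /=; first by [].
case/andP=> Huy Hp; apply/existsP; exists y; by rewrite Huy IH.
Qed.

Lemma path_nstep E u v m : nstep E u v m ->
  exists p, [/\ size p = m, path (adj E) u p & last u p = v].
Proof.
elim: m u => [|m IH] u /=; first by move/eqP->; exists [::].
case/existsP=> y /andP[Huy Hy]; have [p [Hs Hp Hl]] := IH _ Hy.
by exists (y :: p); rewrite /= Hs Huy Hp Hl.
Qed.

Lemma nstep_short E u v m : nstep E u v m -> exists2 m', m' < #|T| & nstep E u v m'.
Proof.
case/path_nstep=> p [_ Hp <-].
case: (shortenP Hp) => p' Hp' Hu _.
exists (size p'); last exact: nstep_path.
have := max_card (mem (u :: p')); rewrite (card_uniqP Hu) /=. by [].
Qed.

Lemma bigmin_leq (I : eqType) (r : seq I) (P : pred I) (F : I -> nat) x0 j :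
  j \in r -> P j -> \big[minn/x0]_(i <- r | P i) F i <= F j.
Proof.
elim: r => [|i r IH] //= Hj Pj; rewrite big_cons.
case/predU1P: Hj => [<-|Hj]; first by rewrite Pj geq_minl.
case: (P i); last exact: IH.
by rewrite geq_min IH // orbT.
Qed.

Lemma dist_le E u v m : nstep E u v m -> dist E u v <= m.
Proof.
move=> H; case: (leqP m #|T|) => Hm'.
  have Hm : m < #|T|.+1 by [].
  have := @bigmin_leq _ (index_enum 'I_#|T|.+1) (fun i : 'I_#|T|.+1 => nstep E u v i)
    (fun i => nat_of_ord i) #|T| (Ordinal Hm) (mem_index_enum _) H.
  by rewrite /dist.
rewrite /dist; apply: leq_trans (ltnW Hm').
apply: (big_ind (fun x => x <= #|T|)) => // [x1 x2 H1 H2|i _].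
  by rewrite geq_min H1.
by rewrite -ltnS.
Qed.

Lemma dist_nstep E u v : (exists m, nstep E u v m) -> nstep E u v (dist E u v).
Proof.
case=> m Hm; have [m' Hlt Hm'] := nstep_short Hm.
have Hd : dist E u v < #|T| by apply: leq_ltn_trans (dist_le Hm') Hlt.
move: Hd; rewrite /dist.
apply: (big_ind (fun x => x < #|T| -> nstep E u v x)) => //.
  by rewrite ltnn.
by move=> x1 x2 H1 H2; rewrite /minn; case: ifP.
Qed.

Lemma dist0 E u : dist E u u = 0.
Proof. by apply/eqP; rewrite -leqn0; apply: (@dist_le E u u 0) => /=. Qed.

Lemma dist1 E y z : adj E y z -> y != z -> dist E y z = 1.
Proof.
move=> H Hne; have Hn := nstep1 H.
have := dist_le Hn; have := dist_nstep (ex_intro _ 1 Hn).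
case: (dist E y z) => [|[|d]] //=.
by move/eqP=> Heq; rewrite Heq eqxx in Hne.
Qed.

Lemma nstep_split E (X : pred T) a v w m :
  (forall y z, adj E y z -> X y -> ~~ X z -> z = a) -> X v -> ~~ X w ->
  nstep E v w m -> exists m1 m2, [/\ m = m1 + m2, nstep E v a m1 & nstep E a w m2].
Proof.
move=> Hc; elim: m v => [|m IH] v Xv Xw /=.
  by move/eqP=> Hvw; rewrite -Hvw Xv in Xw.
case/existsP=> y /andP[Hvy Hy].
case Xy: (X y).
  have [m1 [m2 [-> H1 H2]]] := IH y Xy Xw Hy.
  exists m1.+1, m2; split=> //. apply/existsP; exists y; by rewrite Hvy.
have Hya := Hc _ _ Hvy Xv (negbT Xy); subst y.
exists 1, m; split=> //; exact: nstep1.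
Qed.

Lemma dist_cut E (X : pred T) a v w :
  (forall y z, adj E y z -> X y -> ~~ X z -> z = a) -> X v -> ~~ X w ->
  (exists m, nstep E v a m) -> (exists m, nstep E a w m) ->
  dist E v w = dist E v a + dist E a w.
Proof.
move=> Hc Xv Xw H1 H2.
have N1 := dist_nstep H1; have N2 := dist_nstep H2.
have N := nstep_cat N1 N2.
apply/eqP; rewrite eqn_leq dist_le //=.
have [m1 [m2 [Hm M1 M2]]] := nstep_split Hc Xv Xw (dist_nstep (ex_intro (fun m => nstep E v w m) _ N)).
by rewrite Hm leq_add // dist_le.
Qed.

Lemma connect_nstep E u v : connect (adj E) u v -> exists m, nstep E u v m.
Proof. by case/connectP=> p Hp ->; exists (size p); exact: nstep_path. Qed.

Lemma cclosed E (P : pred T) u v :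
  (forall y z, adj E y z -> P y -> P z) -> P u -> connect (adj E) u v -> P v.
Proof.
move=> Hc Pu /connectP[p Hp ->]; elim: p u Pu Hp => [|y p IH] u Pu //=.
case/andP=> Huy Hp; apply: IH Hp; exact: Hc Huy Pu.
Qed.

Lemma connect_map (T' : finType) (e : rel T') (f : T' -> T) E (g0 h0 : T') :
  (forall g h, e g h -> adj E (f g) (f h)) -> connect e g0 h0 -> connect (adj E) (f g0) (f h0).
Proof.
move=> Hf /connectP[p Hp ->]; elim: p g0 Hp => [|y p IH] g0 //= /andP[Hay Hp].
apply: connect_trans (IH _ Hp); apply: connect1; exact: Hf.
Qed.

End Gen.

Section Alg.
Variable R : realFieldType.
Local Open Scope ring_scope.

Lemma step_alg (rho K mu D h h' E E' pi dl : R) :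
  0 < rho -> 0 <= K -> 0 <= mu -> D = 2 * rho + 2 + K ->
  h < 0 -> E < 0 ->
  E - E' = pi + dl -> pi = - mu * h -> D * dl = - K * rho * (h' + h) ->
  rho * (h' - h) = 2 * E' + dl -> h' < 0 /\ E' < 0.
Proof.
move=> Hr HK Hm HD Hh HE Hb Hc Hd Ha.
have HDp : 0 < D by rewrite HD; lra.
have e1 : rho * (D + K) * h' = rho * h * (D - K) + 2 * D * E'.
  apply/eqP; rewrite -subr_eq0; apply/eqP.
  transitivity (D * (rho * (h' - h) - (2 * E' + dl)) + (D * dl - (- K * rho * (h' + h)))).
    ring.
  by rewrite Ha Hd !subrr; ring.
have e2 : D * E' = D * E + D * mu * h + K * rho * (h' + h).
  apply/eqP; rewrite -subr_eq0; apply/eqP.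
  transitivity (- D * ((E - E') - (pi + dl)) - D * (pi - - mu * h) - (D * dl - (- K * rho * (h' + h)))).
    ring.
  by rewrite Hb Hc Hd !subrr; ring.
have e3 : D * E' * (rho * (D - K)) =
    rho * (D + K) * (D * E + D * mu * h + K * rho * h) + K * rho * (rho * h * (D - K)).
  apply/eqP; rewrite -subr_eq0; apply/eqP.
  transitivity (rho * (D + K) * (D * E' - (D * E + D * mu * h + K * rho * (h' + h)))
     + K * rho * (rho * (D + K) * h' - (rho * h * (D - K) + 2 * D * E'))).
    ring.
  by rewrite e1 e2 !subrr; ring.
have HDK : 0 < D - K by rewrite HD; lra.
have HDK' : 0 < D + K by lra.
have HE' : E' < 0.
  have Hneg : rho * (D + K) * (D * E + D * mu * h + K * rho * h) + K * rho * (rho * h * (D - K)) < 0.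
    have a1 : 0 < rho * (D + K) by apply: mulr_gt0.
    have a2 : D * E + D * mu * h + K * rho * h < 0.
      have b1 : D * E < 0 by rewrite pmulr_rlt0.
      have b2 : D * mu * h <= 0 by apply: mulr_ge0_le0; [apply: mulr_ge0; lra | lra].
      have b3 : K * rho * h <= 0 by apply: mulr_ge0_le0; [apply: mulr_ge0; lra | lra].
      lra.
    have a3 : K * rho * (rho * h * (D - K)) <= 0.
      apply: mulr_ge0_le0; first (apply: mulr_ge0; lra).
      apply: ltW; rewrite pmulr_llt0 // pmulr_rlt0 //.
    have a4 : rho * (D + K) * (D * E + D * mu * h + K * rho * h) < 0 by rewrite pmulr_rlt0.
    lra.
  rewrite -e3 in Hneg.
  have : D * E' < 0 by move: Hneg; rewrite pmulr_llt0 // mulr_gt0.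
  by rewrite pmulr_rlt0.
split=> //.
have : rho * (D + K) * h' < 0.
  rewrite e1; have c1 : rho * h * (D - K) < 0 by rewrite pmulr_llt0 // pmulr_rlt0.
  have c2 : 2 * D * E' < 0 by rewrite pmulr_rlt0 // mulr_gt0.
  lra.
by rewrite pmulr_rlt0 // mulr_gt0.
Qed.


Lemma core (s t : nat) (rho T K mu : R) (L p : nat -> R) :
  (1 <= t)%N -> (t <= s)%N -> 0 < rho -> 0 <= K -> 0 <= mu ->
  (forall m, (0 < m <= s + t)%N -> rho * (p m.-1 - p m) = T - L (2 * m)%N - L (2 * m).-1) ->
  (forall m, (0 < m <= s + t)%N ->
     (2 * rho + 2 + K) * (L (2 * m)%N - L (2 * m).-1) = K * (rho * (p m.-1 + p m) + T)) ->
  (forall j, (0 < j < t)%N -> (L (2 * (s - j)).+1 - L (2 * (s - j))%N)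
       - (L (2 * (s + j)).+1 - L (2 * (s + j))%N) = mu * (p (s - j)%N - p (s + j)%N)) ->
  p (s - t)%N <= L (2 * (s - t)).+1 ->
  T - L (2 * (s + t))%N = p (s + t)%N ->
  T - L (2 * s).+1 <= L (2 * s)%N.
Proof.
move=> Ht Hts Hr HK Hm H1 H3 H2 H4 H5.
set D := 2 * rho + 2 + K.
pose hh j := p (s + j)%N - p (s - j)%N.
pose EE j := L (2 * (s - j)).+1 - T + L (2 * (s + j))%N.
pose dd j := (L (2 * (s - j) + 2)%N - L (2 * (s - j)).+1) - (L (2 * (s + j))%N - L (2 * (s + j)).-1).
have Ha : forall j, (0 < j <= t)%N -> rho * (hh j - hh j.-1) = 2 * EE j + dd j.
  move=> j Hj.
  have A1 := H1 (s + j)%N ltac:(lia).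
  have A2 := H1 (s - j).+1 ltac:(lia).
  have e1 : (s - j).+1 = (s - j.-1)%N by lia.
  have e2 : (2 * (s - j).+1)%N = (2 * (s - j) + 2)%N by lia.
  have e3 : (2 * (s - j) + 2).-1 = (2 * (s - j)).+1 by lia.
  have e4 : (s + j).-1 = (s + j.-1)%N by lia.
  rewrite e2 e3 [(s - j).+1.-1]/= e1 in A2; rewrite e4 in A1.
  rewrite /hh /EE /dd; lra.
have Hd : forall j, (0 < j <= t)%N -> D * dd j = - K * rho * (hh j + hh j.-1).
  move=> j Hj.
  have A1 := H3 (s + j)%N ltac:(lia).
  have A2 := H3 (s - j).+1 ltac:(lia).
  have e1 : (s - j).+1 = (s - j.-1)%N by lia.
  have e2 : (2 * (s - j).+1)%N = (2 * (s - j) + 2)%N by lia.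
  have e3 : (2 * (s - j) + 2).-1 = (2 * (s - j)).+1 by lia.
  have e4 : (s + j).-1 = (s + j.-1)%N by lia.
  rewrite e2 e3 [(s - j).+1.-1]/= e1 in A2; rewrite e4 in A1.
  rewrite /dd /hh mulrBr A1 A2; ring.
have Hb : forall j, (0 < j)%N -> (j < t)%N ->
    EE j - EE j.+1 = - mu * hh j + dd j.+1.
  move=> j Hj Hjt; have A := H2 j ltac:(lia).
  have e1 : (2 * (s - j.+1) + 2)%N = (2 * (s - j))%N by lia.
  have e2 : (2 * (s - j.+1)).+1 = (2 * (s - j)).-1 by lia.
  have e3 : (2 * (s + j.+1))%N = (2 * (s + j)).+2 by lia.
  have e4 : (2 * (s - j)).-1.+1 = (2 * (s - j))%N by lia.
  rewrite /EE /dd /hh e1 e2 e3.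
  have -> : (2 * (s + j)).+2.-1 = (2 * (s + j)).+1 by [].
  have -> : (2 * (s + j)).+2 = (2 * (s + j) + 2)%N by lia.
  lra.
have hh0 : hh 0%N = 0 by rewrite /hh addn0 subn0 subrr.
have HDK : 0 < D - K by rewrite /D; lra.
have HD : 0 < D by rewrite /D; lra.
have base : rho * hh 1%N * (D + K) = 2 * D * EE 1%N.
  have A := Ha 1%N ltac:(lia); have B := Hd 1%N ltac:(lia).
  rewrite /= hh0 subr0 addr0 in A B.
  apply/eqP; rewrite -subr_eq0; apply/eqP.
  transitivity (D * (rho * hh 1%N - (2 * EE 1%N + dd 1%N)) + (D * dd 1%N - - K * rho * hh 1%N)).
    ring.
  by rewrite A B !subrr; ring.
have Hh1 : 0 <= hh 1%N.
  rewrite leNgt; apply/negP => Hneg.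
  have ind : forall j, (0 < j <= t)%N -> hh j < 0 /\ EE j < 0.
    elim=> [|j IH] Hj; first by lia.
    case: (posnP j) => Hj0.
      subst j; split=> //.
      have : 2 * D * EE 1%N < 0.
        rewrite -base; rewrite pmulr_llt0; last lra.
        by rewrite pmulr_rlt0.
      by rewrite pmulr_rlt0 // mulr_gt0.
    have [IH1 IH2] := IH ltac:(lia).
    have := Ha j.+1 ltac:(lia); have := Hd j.+1 ltac:(lia); rewrite /= => Dd Aa.
    apply: (@step_alg rho K mu D (hh j) (hh j.+1) (EE j) (EE j.+1) (- mu * hh j) (dd j.+1)) => //.
    exact: Hb.
  have [It Et] := ind t ltac:(lia).
  move: Et It; rewrite /EE /hh; lra.
have fin : 2 * D * (L (2 * s)%N - T + L (2 * s).+1) = rho * hh 1%N * (D - K).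
  have B := Hd 1%N ltac:(lia); rewrite /= hh0 addr0 in B.
  have e : L (2 * s)%N - T + L (2 * s).+1 = EE 1%N + dd 1%N.
    rewrite /EE /dd.
    have -> : (2 * (s - 1) + 2)%N = (2 * s)%N by lia.
    have -> : (2 * (s - 1)).+1 = (2 * s).-1 by lia.
    have -> : (2 * (s + 1)).-1 = (2 * s).+1 by lia.
    ring.
  rewrite e.
  apply/eqP; rewrite -subr_eq0; apply/eqP.
  transitivity (- (rho * hh 1%N * (D + K) - 2 * D * EE 1%N) + (D * dd 1%N - - K * rho * hh 1%N) * 2).
    ring.
  by rewrite base B !subrr; ring.
have : 0 <= 2 * D * (L (2 * s)%N - T + L (2 * s).+1).
  by rewrite fin; apply: mulr_ge0 => //; [apply: mulr_ge0; lra | lra].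
rewrite pmulr_rge0; last by apply: mulr_gt0.
lra.
Qed.


Lemma inner_sym (rho T K a b A B : R) :
  rho * (a - b) = T - B - A -> (rho + 1) * (B - A) = K * (rho * a + A) ->
  (2 * rho + 2 + K) * (B - A) = K * (rho * (a + b) + T).
Proof.
move=> H1 H2; apply/eqP; rewrite -subr_eq0; apply/eqP.
transitivity (2 * ((rho + 1) * (B - A) - K * (rho * a + A)) + K * (rho * (a - b) - (T - B - A))).
  ring.
by rewrite H1 H2 !subrr; ring.
Qed.

Lemma lev_diff (C rho T p1 p2 X1 X2 : R) :
  X1 = p1 + C * (rho * p1 + T) -> X2 = p2 + C * (rho * p2 + T) ->
  X1 - X2 = (1 + C * rho) * (p1 - p2).
Proof. by move=> -> ->; ring. Qed.

Lemma sumS (n0 : nat) (S : 'I_n0 -> R) (D K1 Y : R) :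
  0 < D -> (forall a, D * S a = K1 * Y) -> \sum_a S a = (n0%:R * K1 / D) * Y.
Proof.
move=> HD H.
have E : forall a, S a = K1 * Y / D.
  move=> a; rewrite -(H a) mulrC mulrA mulVf ?mul1r //; lra.
under eq_bigr => a _ do rewrite E.
rewrite sumr_const card_ord -mulr_natl.
set N := n0%:R; field; lra.
Qed.

End Alg.


Section Conc.
Variables (k c s t : nat) (W : finType) (EG : {set {set W}}) (r : W).
Hypotheses (hk : (2 <= k)%N) (hc : (1 <= c)%N) (ht : (2 <= t)%N) (hts : (t <= s)%N).

Local Notation n := (s + t)%N.
Local Notation V := (carrier k c s t W).
Local Notation u := (uu k c s t W).
Local Notation EH := (EH k c s t EG r).
Local Notation VH := (VH k c s t r).
Local Notation pedge := (pedge k c s t W).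
Local Notation sedge := (@sedge k c s t W).
Local Notation emb := (emb k c s t r).
Local Notation valid := (@valid k c s t W r).

Definition pos2 (x : V) : nat :=
  match x with
  | inl (inl i) => 2 * i
  | inl (inr (i, _)) => (2 * i).+1
  | inr (inl (i, _, _)) => 2 * i
  | inr (inr _) => 2 * s
  end.

Definition inner (i : nat) (j : 'I_(k - 2)) : V := inl (inr (@inord n i, j)).
Definition leaf (i : nat) (a : 'I_c) (b : 'I_(k - 1)) : V := inr (inl (@inord n i, a, b)).

Lemma pos2_u i : (i <= n)%N -> pos2 (u i) = (2 * i)%N.
Proof. by move=> Hi; rewrite /= inordK. Qed.

Lemma pos2_inner i j : (i <= n)%N -> pos2 (inner i j) = (2 * i).+1.
Proof. by move=> Hi; rewrite /= inordK. Qed.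

Lemma pos2_leaf i a b : (i <= n)%N -> pos2 (leaf i a b) = (2 * i)%N.
Proof. by move=> Hi; rewrite /= inordK. Qed.

Lemma pos2_emb w : pos2 (emb w) = (2 * s)%N.
Proof. rewrite /Defs.emb; case: eqP => _ //=; rewrite inordK //; lia. Qed.

Lemma u_inj i j : (i <= n)%N -> (j <= n)%N -> u i = u j -> i = j.
Proof. move=> Hi Hj [] /(congr1 val); rewrite /= !inordK //. Qed.

Lemma u_val (i : 'I_n.+1) : u i = inl (inl i).
Proof. by rewrite /Defs.uu inord_val. Qed.

Lemma in_pedge m y : y \in pedge m ->
  [\/ y = u m.-1, y = u m | exists j, y = inner m.-1 j].
Proof.
rewrite /Defs.pedge !inE => /orP[/orP[/eqP->|/eqP->]|]; [by constructor 1|by constructor 2|].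
by case/imsetP=> j _ ->; constructor 3; exists j.
Qed.

Lemma pedge_u1 m : u m.-1 \in pedge m.
Proof. by rewrite /Defs.pedge !inE eqxx. Qed.
Lemma pedge_u2 m : u m \in pedge m.
Proof. by rewrite /Defs.pedge !inE eqxx orbT. Qed.
Lemma pedge_inner m j : inner m.-1 j \in pedge m.
Proof. by rewrite /Defs.pedge !inE; apply/orP; right; apply/imsetP; exists j. Qed.

Lemma in_sedge (i : 'I_n.+1) a y : y \in sedge i a ->
  y = u i \/ exists b, y = leaf i a b.
Proof.
rewrite /Defs.sedge !inE => /orP[/eqP->|]; first by left.
by case/imsetP=> b _ ->; right; exists b; rewrite /leaf inord_val.
Qed.

Lemma sedge_u (i : 'I_n.+1) a : u i \in sedge i a.
Proof. by rewrite /Defs.sedge !inE eqxx. Qed.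
Lemma sedge_leaf (i : 'I_n.+1) a b : leaf i a b \in sedge i a.
Proof. by rewrite /Defs.sedge !inE /leaf inord_val; apply/orP; right; apply/imsetP; exists b. Qed.

Lemma in_EH e : e \in EH ->
  [\/ exists2 i : 'I_n, true & e = pedge i.+1,
      exists2 ia : 'I_n.+1 * 'I_c, star_ok s t ia.1 & e = sedge ia.1 ia.2
    | exists2 e', e' \in EG & e = emb @: e'].
Proof.
rewrite /Defs.EH !inE => /orP[/orP[]|].
- by case/imsetP=> i _ ->; constructor 1; exists i.
- by case/imsetP=> ia; rewrite inE => Hia ->; constructor 2; exists ia.
- by case/imsetP=> e' He' ->; constructor 3; exists e'.
Qed.

Lemma pedge_EH (i : nat) : (i < n)%N -> pedge i.+1 \in EH.
Proof.
move=> Hi; rewrite /Defs.EH !inE; apply/orP; left; apply/orP; left.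
by apply/imsetP; exists (Ordinal Hi).
Qed.

Lemma sedge_EH (i : 'I_n.+1) a : star_ok s t i -> sedge i a \in EH.
Proof.
move=> Hi; rewrite /Defs.EH !inE; apply/orP; left; apply/orP; right.
by apply/imsetP; exists (i, a); rewrite ?inE.
Qed.

Lemma emb_EH e : e \in EG -> emb @: e \in EH.
Proof. by move=> He; rewrite /Defs.EH !inE; apply/orP; right; apply/imsetP; exists e. Qed.

Lemma edge_step e y z : e \in EH -> y \in e -> z \in e -> (pos2 y < pos2 z)%N ->
  exists i, [/\ (i < n)%N, e = pedge i.+1, (2 * i <= pos2 y)%N, (pos2 z <= 2 * i + 2)%N
   & (y = u i \/ pos2 y = (2 * i).+1) /\ (z = u i.+1 \/ pos2 z = (2 * i).+1)].
Proof.
case/in_EH.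
- case=> i0 _ -> Hy Hz Hlt; exists i0.
  have Hi := ltn_ord i0.
  have P1 : pos2 (u i0) = (2 * i0)%N by rewrite pos2_u //; lia.
  have P2 : pos2 (u i0.+1) = (2 * i0 + 2)%N by rewrite pos2_u //; lia.
  have P3 : forall j, pos2 (inner i0 j) = (2 * i0).+1 by move=> j; rewrite pos2_inner //; lia.
  move: Hlt; case/in_pedge: Hy => [Ey|Ey|[j Ey]]; case/in_pedge: Hz => [Ez|Ez|[j' Ez]];
  rewrite /= in Ey Ez; rewrite Ey Ez ?P1 ?P2 ?P3 => Hlt; try lia.
  + split; [done|done|lia|lia| split; [by left | by left]].
  + split; [done|done|lia|lia| split; [by left | by right]].
  + split; [done|done|lia|lia| split; [by right | by left]].
- case=> [[i a]] /= _ -> Hy Hz.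
  case/in_sedge: Hy => [->|[b ->]]; case/in_sedge: Hz => [->|[b' ->]];
  rewrite ?u_val /= /leaf ?inord_val /=; lia.
- case=> e' _ -> /imsetP[w _ ->] /imsetP[w' _ ->]; rewrite !pos2_emb; lia.
Qed.


Lemma valid_u i : valid (u i).
Proof. by []. Qed.

Lemma edge_valid e y : e \in EH -> y \in e -> valid y.
Proof.
case/in_EH.
- case=> i _ -> /in_pedge[->|->|[j ->]] //=; have Hi := ltn_ord i; rewrite inordK; lia.
- case=> [[i a]] /= Hi -> /in_sedge[->|[b ->]] //=; by rewrite inord_val.
- case=> e' _ -> /imsetP[w _ ->]; rewrite /Defs.emb; case: eqP => //= /eqP; by [].
Qed.

Lemma emb_u w j : (j <= n)%N -> emb w = u j -> j = s.
Proof.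
move=> Hj; rewrite /Defs.emb; case: eqP => // _ H; symmetry; apply: (u_inj _ _ H); lia.
Qed.

Lemma leaf_adj (i : nat) a b z : (i <= n)%N -> adj EH (leaf i a b) z ->
  z = u i \/ exists b', z = leaf i a b'.
Proof.
move=> Hi /adjE[e [He Hy Hz]]; move: He Hy Hz; case/in_EH.
- by case=> i0 _ -> /in_pedge[|| [j]].
- case=> [[i0 a0]] /= _ -> /in_sedge[//|[b0 [Ei Ea Eb]]].
  have Ei' : i0 = inord i by rewrite Ei inord_val.
  subst i0 a0 => /in_sedge[->|[b' ->]]; [left|right].
    by rewrite /Defs.uu inordK.
  by exists b'; rewrite /leaf !inordK.
- by case=> e' _ -> /imsetP[w _]; rewrite /Defs.emb; case: eqP.
Qed.

Lemma cutA m : (0 < m <= n)%N -> forall y z, adj EH y z ->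
  (2 * m).-1 <= pos2 y -> ~~ ((2 * m).-1 <= pos2 z) -> z = u m.-1.
Proof.
move=> Hm y z /adjE[e [He Hy Hz]] Py; rewrite -ltnNge => Pz.
have Hlt : (pos2 z < pos2 y)%N by lia.
have [i [Hi _ H1 H2 [[Ez|Ez] _]]] := edge_step He Hz Hy Hlt.
  by have -> : m.-1 = i by lia.
lia.
Qed.

Lemma cutB m : (0 < m <= n)%N -> forall y z, adj EH y z ->
  pos2 y <= (2 * m).-1 -> ~~ (pos2 z <= (2 * m).-1) -> z = u m.
Proof.
move=> Hm y z /adjE[e [He Hy Hz]] Py; rewrite -ltnNge => Pz.
have Hlt : (pos2 y < pos2 z)%N by lia.
have [i [Hi _ H1 H2 [_ [Ez|Ez]]]] := edge_step He Hy Hz Hlt.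
  by have -> : m = i.+1 by lia.
lia.
Qed.

Lemma cutL i a : (i <= n)%N -> forall y z, adj EH y z ->
  [exists b, y == leaf i a b] -> ~~ [exists b, z == leaf i a b] -> z = u i.
Proof.
move=> Hi y z Hyz /existsP[b /eqP Ey] Hz; subst y.
case: (leaf_adj Hi Hyz) => // [[b' Ez]].
by move: Hz; rewrite Ez; case/existsP; exists b'.
Qed.


Hypothesis hcon : hconnected [set: W] EG.

Lemma conn_gen (E' : {set {set V}}) lo hi : (lo <= hi <= n)%N ->
  (forall i, (lo <= i < hi)%N -> pedge i.+1 \in E') ->
  (forall (i : 'I_n.+1) a, star_ok s t i -> (lo <= i <= hi)%N -> sedge i a \in E') ->
  ((lo <= s <= hi)%N -> forall e, e \in EG -> emb @: e \in E') ->
  forall y, valid y -> (2 * lo <= pos2 y <= 2 * hi)%N -> connect (adj E') (u lo) y.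
Proof.
move=> Hlh HP HS HG.
have Hp : forall d, (lo + d <= hi)%N -> connect (adj E') (u lo) (u (lo + d)).
  elim=> [|d IH] Hd; first by rewrite addn0 connect0.
  apply: connect_trans (IH ltac:(lia)) _; apply: connect1; rewrite addnS.
  apply: (adjI (HP (lo + d)%N ltac:(lia))); [exact: pedge_u1|exact: pedge_u2].
have Hp' : forall i, (lo <= i <= hi)%N -> connect (adj E') (u lo) (u i).
  move=> i Hi; have := Hp (i - lo)%N ltac:(lia); by have -> : (lo + (i - lo))%N = i by lia.
case=> [[i|[i j]]|[[[i a] b]|w]] /= Hv Hpos.
- by have := Hp' i ltac:(lia); rewrite u_val.
- have Hi : (i < n)%N by [].
  apply: connect_trans (Hp' i ltac:(lia)) _; apply: connect1.
  apply: (adjI (HP i ltac:(lia))); first exact: pedge_u1.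
  by have := pedge_inner i.+1 j; rewrite /inner /= inord_val.
- apply: connect_trans (Hp' i ltac:(lia)) _; apply: connect1.
  apply: (adjI (HS i a Hv ltac:(lia))); first exact: sedge_u.
  by have := sedge_leaf i a b; rewrite /leaf inord_val.
- apply: connect_trans (Hp' s ltac:(lia)) _.
  have -> : u s = emb r by rewrite /Defs.emb eqxx.
  have -> : inr (inr w) = emb w by rewrite /Defs.emb (negbTE Hv).
  apply: (connect_map (e := adj EG)); last by apply: hcon; rewrite inE.
  move=> g h /adjE[e [He Hg Hh]]; apply: (adjI (HG ltac:(lia) e He)); exact: imset_f.
Qed.

Lemma conn_all y z : valid y -> valid z -> connect (adj EH) y z.
Proof.
have H : forall y, valid y -> connect (adj EH) (u 0) y.
  move=> y' Hy'; apply: (@conn_gen EH 0 n) => //; try lia.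
  - by move=> i Hi; apply: pedge_EH; lia.
  - by move=> i a Hi _; apply: sedge_EH.
  - by move=> _ e He; apply: emb_EH.
  - case: y' Hy' => [[i|[i j]]|[[[i a] b]|w']] /= Hv.
    + have := ltn_ord i; lia.
    + have Hi : (i < n)%N by []. lia.
    + case/and3P: Hv => _ Hi _; lia.
    + lia.
move=> Hy Hz; apply: connect_trans (H z Hz).
by rewrite (sym_connect_sym (@adj_sym _ EH) y); exact: H.
Qed.

Lemma conn_nstep y z : valid y -> valid z -> exists m, nstep EH y z m.
Proof. by move=> Hy Hz; apply: connect_nstep; exact: conn_all. Qed.

Lemma pos2_valid y : valid y -> (pos2 y <= 2 * n)%N.
Proof.
case: y => [[i|[i j]]|[[[i a] b]|w']] /= Hv.
- have := ltn_ord i; lia.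
- have Hi : (i < n)%N by []. lia.
- case/and3P: Hv => _ Hi _; lia.
- lia.
Qed.


Lemma comp_eq (E' : {set {set V}}) u0 (P : pred V) :
  (forall y z, adj E' y z -> P y -> P z) -> P u0 ->
  (forall y, P y -> connect (adj E') u0 y) -> component E' u0 = [set y | P y].
Proof.
move=> Hc Pu Hconn; apply/setP => y; rewrite /component !inE; apply/idP/idP.
- by move=> H; apply: (cclosed Hc Pu H).
- exact: Hconn.
Qed.

Lemma pedge_ne i m : (i < n)%N -> (0 < m <= n)%N -> i.+1 != m -> pedge i.+1 != pedge m.
Proof.
move=> Hi Hm Hne; apply/negP => /eqP Heq.
have H1 := pedge_u1 i.+1; have H2 := pedge_u2 i.+1; rewrite Heq /= in H1 H2.
case/in_pedge: H1 => [E1|E1|[j //]]; move/u_inj: E1 => E1;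
case/in_pedge: H2 => [E2|E2|[j //]]; move/u_inj: E2 => E2; lia.
Qed.

Lemma sedge_ne (i : 'I_n.+1) a m : sedge i a != pedge m.
Proof.
apply/negP => /eqP Heq.
have Hb : (0 < k - 1)%N by lia.
have := sedge_leaf i a (Ordinal Hb); rewrite Heq; by case/in_pedge=> [||[j]].
Qed.

Lemma emb_ne (e : {set W}) m : (0 < m <= n)%N -> emb @: e != pedge m.
Proof.
move=> Hm; apply/negP => /eqP Heq.
have H1 := pedge_u1 m; have H2 := pedge_u2 m; rewrite -Heq in H1 H2.
case/imsetP: H1 => w1 _ /esym/emb_u E1; case/imsetP: H2 => w2 _ /esym/emb_u E2.
have := E1 ltac:(lia); have := E2 ltac:(lia); lia.
Qed.

Lemma Hup_eq : Hup k c s t EG r s = [set y | valid y && (pos2 y <= 2 * s)%N].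
Proof.
apply: comp_eq.
- move=> y z /adjE[e [He Hy Hz]] /andP[Vy Py]; move: He; rewrite in_setD1 => /andP[Hne He].
  rewrite (edge_valid He Hz) /=; case: (leqP (pos2 z) (pos2 y)) => Hl; first lia.
  have [i [Hi Ei H1 H2 _]] := edge_step He Hy Hz Hl.
  case: (leqP (pos2 z) (2 * s)) => // Hz'.
  have : i = s by lia.
  by move=> Eis; rewrite Ei Eis eqxx in Hne.
- rewrite /= inordK //; lia.
- move=> y /andP[Vy Py]; apply: (@conn_gen _ 0 s) => //; try lia.
  + move=> i Hi; rewrite in_setD1 pedge_EH ?pedge_ne //; lia.
  + by move=> i a Hi _; rewrite in_setD1 sedge_ne sedge_EH.
  + move=> _ e He; rewrite in_setD1 emb_EH // emb_ne //; lia.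
Qed.

Lemma Hdown_eq m : (0 < m <= s.+1)%N ->
  Hdown k c s t EG r m = [set y | valid y && (2 * m <= pos2 y)%N].
Proof.
move=> Hm; apply: comp_eq.
- move=> y z /adjE[e [He Hy Hz]] /andP[Vy Py]; move: He; rewrite in_setD1 => /andP[Hne He].
  rewrite (edge_valid He Hz) /=; case: (leqP (pos2 y) (pos2 z)) => Hl; first lia.
  have [i [Hi Ei H1 H2 _]] := edge_step He Hz Hy Hl.
  case: (leqP (2 * m) (pos2 z)) => // Hz'.
  have : i.+1 = m by lia.
  by move=> Eis; rewrite Ei Eis eqxx in Hne.
- rewrite /= inordK //; lia.
- have Hc : forall y, valid y -> (2 * m <= pos2 y)%N ->
       connect (adj (EH :\ pedge m)) (u m) y.
    move=> y Vy Py; apply: (@conn_gen _ m n) => //; try lia.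
    + move=> i Hi; rewrite in_setD1 pedge_EH ?pedge_ne //; lia.
    + by move=> i a Hi _; rewrite in_setD1 sedge_ne sedge_EH.
    + move=> _ e He; rewrite in_setD1 emb_EH // emb_ne //; lia.
    + by have := pos2_valid Vy; lia.
  move=> y /andP[Vy Py]; apply: connect_trans (Hc y Vy Py).
  rewrite (sym_connect_sym (@adj_sym _ _) (u n)); apply: Hc => //.
  by rewrite pos2_u //; lia.
Qed.

Lemma Gat_s y : valid y -> (y \in Gat k c s t r s) = (pos2 y == 2 * s)%N.
Proof.
move=> Vy; rewrite /Gat eqxx; apply/imsetP/eqP.
- by case=> w _ ->; rewrite pos2_emb.
- case: y Vy => [[i|[i j]]|[[[i a] b]|w]] /= Vy Hp.
  + exists r => //; rewrite /Defs.emb eqxx -u_val; congr u; lia.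
  + lia.
  + by case/and3P: Vy => _ _; lia.
  + by exists w => //; rewrite /Defs.emb (negbTE Vy).
Qed.

Lemma Gat_s1 y : valid y -> (y \in Gat k c s t r s.+1) = (pos2 y == 2 * s.+1)%N.
Proof.
move=> Vy; have Hs : (s.+1 == s) = false by lia.
have Hok : star_ok s t s.+1 by rewrite /star_ok; apply/and3P; split; lia.
rewrite /Gat Hs Hok !inE; apply/idP/eqP.
- case/orP => [/eqP ->|/imset2P[a b _ _ ->]]; first by rewrite pos2_u //; lia.
  by rewrite /= inordK //; lia.
- case: y Vy => [[i|[i j]]|[[[i a] b]|w]] /= Vy Hp.
  + by apply/orP; left; rewrite -u_val; apply/eqP; congr u; lia.
  + lia.
  + try (apply/orP; right); apply/imset2P; exists a b => //.
    have -> : i = inord s.+1 :> 'I_n.+1 by apply: val_inj; rewrite /= inordK; lia.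
    by [].
  + lia.
Qed.

Lemma Vup_eq : Vup' k c s t EG r s = [set y | valid y && (pos2 y < 2 * s)%N].
Proof.
apply/setP => y; rewrite /Vup' Hup_eq !inE.
case Vy: (valid y) => /=; last by rewrite andbF.
rewrite Gat_s //; lia.
Qed.

Lemma Vdown_eq : Vdown' k c s t EG r s = [set y | valid y && (2 * s < pos2 y)%N].
Proof.
apply/setP => y; rewrite /Vdown' Hdown_eq ?inE; last lia.
case Vy: (valid y) => /=; last by rewrite andbF.
rewrite Gat_s //; lia.
Qed.

Lemma Vdown1_eq : Vdown' k c s t EG r s.+1 = [set y | valid y && (2 * s.+1 < pos2 y)%N].
Proof.
apply/setP => y; rewrite /Vdown' Hdown_eq ?inE; last lia.
case Vy: (valid y) => /=; last by rewrite andbF.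
rewrite Gat_s1 //; lia.
Qed.


Lemma dist_edge e y z : e \in EH -> y \in e -> z \in e -> y != z -> dist EH y z = 1%N.
Proof. by move=> He Hy Hz; apply: dist1; exact: adjI He Hy Hz. Qed.

Lemma inner_inj i j j' : (i <= n)%N -> inner i j = inner i j' -> j = j'.
Proof. by move=> Hi [->]. Qed.

Lemma odd_inner w q : valid w -> pos2 w = (2 * q).+1 -> (q < n)%N /\ exists j, w = inner q j.
Proof.
case: w => [[i|[i j]]|[[[i a] b]|w]] /= Vw Hp; try lia.
have Hq : i = q :> nat by lia.
split; first by rewrite -Hq.
exists j; rewrite /inner; congr (inl (inr (_, _))); apply: val_inj; rewrite /= inordK -Hq //.
Qed.

Lemma u_ne i j : (i <= n)%N -> (j <= n)%N -> i != j -> u i != u j.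
Proof. by move=> Hi Hj Hne; apply/negP => /eqP /(u_inj Hi Hj) H; move: Hne; rewrite H eqxx. Qed.

Lemma pedge_EH' m : (0 < m <= n)%N -> pedge m \in EH.
Proof. move=> Hm; have := @pedge_EH m.-1 ltac:(lia); by have -> : m.-1.+1 = m by lia. Qed.

Lemma valid_inner i j : (i < n)%N -> valid (inner i j).
Proof. by move=> Hi; rewrite /= inordK //; lia. Qed.

Lemma valid_leaf i a b : star_ok s t i -> valid (leaf i a b).
Proof. move=> Hi; rewrite /= inordK //; move: Hi; rewrite /star_ok; lia. Qed.

Lemma sedge_EH' i a : star_ok s t i -> sedge (inord i) a \in EH.
Proof. by move=> Hi; apply: sedge_EH; rewrite inordK //; move: Hi; rewrite /star_ok; lia. Qed.

Lemma leaf_in i a b : (i <= n)%N -> leaf i a b \in sedge (inord i) a.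
Proof. move=> Hi; have := sedge_leaf (inord i) a b; by rewrite /leaf inordK. Qed.

Lemma u_in_sedge i a : (i <= n)%N -> u i \in sedge (inord i) a.
Proof. move=> Hi; have := sedge_u (inord i) a; by rewrite inordK. Qed.

Section Eig.
Variables (R : rcfType) (x : V -> R) (rho : R).
Local Open Scope ring_scope.
Hypothesis Heig : dist_eigen_eq VH EH rho x.
Hypothesis Hpos : forall v, v \in VH -> 0 < x v.
Local Notation d := (dist EH).

Definition Lc (q : nat) : R := \sum_(w in VH | (pos2 w < q)%N) x w.
Definition TT : R := \sum_(w in VH) x w.
Definition p (i : nat) : R := x (u i).

Lemma inVH y : (y \in VH) = valid y.
Proof. by rewrite inE. Qed.

Lemma eig_nat a b (f g : V -> nat) : valid a -> valid b ->
  (forall w, valid w -> (d a w + f w = d b w + g w)%N) ->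
  rho * x a + \sum_(w in VH) (f w)%:R * x w = rho * x b + \sum_(w in VH) (g w)%:R * x w.
Proof.
move=> Ha Hb H; rewrite -(Heig (v := a)) ?inVH // -(Heig (v := b)) ?inVH //.
rewrite -!big_split; apply: eq_bigr => w Hw /=.
by rewrite -!mulrDl -!natrD H // -inVH.
Qed.


Lemma sum_ind (P : pred V) : \sum_(w in VH) ((P w : nat)%:R) * x w = \sum_(w in VH | P w) x w.
Proof.
rewrite big_mkcondr; apply: eq_bigr => w _; case: (P w) => /=; by rewrite ?mul1r ?mul0r.
Qed.

Lemma sum_gt q : \sum_(w in VH | (q < pos2 w)%N) x w = TT - Lc q.+1.
Proof.
have H : TT = Lc q.+1 + \sum_(w in VH | ~~ (pos2 w < q.+1)%N) x w.
  by rewrite /TT /Lc (bigID (fun w => (pos2 w < q.+1)%N)).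
rewrite H [Lc _ + _]addrC addrK.
by apply: eq_bigl => w; rewrite ltnNge.
Qed.

Lemma dist_cutA m v w : (0 < m <= n)%N -> valid v -> valid w ->
  ((2 * m).-1 <= pos2 v)%N -> (pos2 w < (2 * m).-1)%N -> d v w = (d v (u m.-1) + d (u m.-1) w)%N.
Proof.
move=> Hm Vv Vw Hv Hw.
apply: (@dist_cut _ _ (fun y => (2 * m).-1 <= pos2 y)%N) => //.
- exact: cutA.
- by rewrite -ltnNge.
- exact: conn_nstep.
- exact: conn_nstep.
Qed.

Lemma dist_cutB m v w : (0 < m <= n)%N -> valid v -> valid w ->
  (pos2 v <= (2 * m).-1)%N -> ((2 * m).-1 < pos2 w)%N -> d v w = (d v (u m) + d (u m) w)%N.
Proof.
move=> Hm Vv Vw Hv Hw.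
apply: (@dist_cut _ _ (fun y => pos2 y <= (2 * m).-1)%N) => //.
- exact: cutB.
- by rewrite -ltnNge.
- exact: conn_nstep.
- exact: conn_nstep.
Qed.

Lemma d_uu m : (0 < m <= n)%N -> d (u m) (u m.-1) = 1%N /\ d (u m.-1) (u m) = 1%N.
Proof.
move=> Hm; have He := pedge_EH' Hm; split; apply: (dist_edge He).
all: try exact: pedge_u1; try exact: pedge_u2.
all: apply: u_ne; lia.
Qed.

Lemma d_ui m j : (0 < m <= n)%N ->
  [/\ d (u m.-1) (inner m.-1 j) = 1%N, d (u m) (inner m.-1 j) = 1%N,
      d (inner m.-1 j) (u m.-1) = 1%N & d (inner m.-1 j) (u m) = 1%N].
Proof.
move=> Hm; have He := pedge_EH' Hm.
have H1 := pedge_u1 m; have H2 := pedge_u2 m; have H3 := pedge_inner m j.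
by split; apply: (dist_edge He).
Qed.

Lemma d_uu' i : (i < n)%N -> d (u i.+1) (u i) = 1%N /\ d (u i) (u i.+1) = 1%N.
Proof. by move=> Hi; exact: (@d_uu i.+1 ltac:(lia)). Qed.

Lemma d_ui' i j : (i < n)%N ->
  [/\ d (u i) (inner i j) = 1%N, d (u i.+1) (inner i j) = 1%N,
      d (inner i j) (u i) = 1%N & d (inner i j) (u i.+1) = 1%N].
Proof. by move=> Hi; exact: (@d_ui i.+1 j ltac:(lia)). Qed.

Lemma EF1 m : (0 < m <= n)%N -> rho * (p m.-1 - p m) = TT - Lc (2 * m) - Lc (2 * m).-1.
Proof.
move=> Hm.
have E := @eig_nat (u m.-1) (u m) (fun w => (pos2 w < (2 * m).-1)%N : nat)
   (fun w => ((2 * m).-1 < pos2 w)%N : nat) (valid_u _) (valid_u _).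
have [D1 D2] := d_uu Hm.
have Pm : pos2 (u m) = (2 * m)%N by rewrite pos2_u //; lia.
have Pm1 : pos2 (u m.-1) = (2 * m.-1)%N by rewrite pos2_u //; lia.
rewrite !sum_ind sum_gt in E.
have -> : (2 * m)%N = (2 * m).-1.+1 by lia.
rewrite /p; rewrite -/(Lc _) in E.
suff H : rho * x (u m.-1) + Lc (2 * m).-1 = rho * x (u m) + (TT - Lc (2 * m).-1.+1).
  by rewrite mulrBr; move: H; set a := rho * x _; set b := rho * x _ => H; lra.
apply: E => w Vw.
case: (ltngtP (pos2 w) (2 * m).-1) => Hw /=.
  rewrite (@dist_cutA m (u m) w) ?D1 //; lia.
- rewrite (@dist_cutB m (u m.-1) w) ?D2 //; lia.
- have [Hq [j Ew]] := @odd_inner w m.-1 Vw ltac:(lia).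
  have [A1 A2 _ _] := d_ui j Hm.
  by rewrite Ew A1 A2.
Qed.


Lemma sum_pred1 y : valid y -> \sum_(w in VH | w == y) x w = x y.
Proof.
move=> Vy; rewrite (big_pred1 y) // => w /=; rewrite inVH.
by case: eqP => [->|]; rewrite ?Vy ?andbF.
Qed.

Lemma lev q : Lc q.+1 - Lc q = \sum_(w in VH | pos2 w == q) x w.
Proof.
have H : Lc q.+1 = Lc q + \sum_(w in VH | pos2 w == q) x w.
  rewrite {1}/Lc (bigID (fun w => (pos2 w < q)%N)) /=; congr (_ + _).
    by apply: eq_bigl => w; rewrite -andbA; congr (_ && _); lia.
  by apply: eq_bigl => w; rewrite -andbA; congr (_ && _); lia.
by rewrite H [Lc q + _]addrC addrK.
Qed.

Lemma Lc_diff q1 q2 : (q1 <= q2)%N ->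
  Lc q2 = Lc q1 + \sum_(w in VH | (q1 <= pos2 w < q2)%N) x w.
Proof.
move=> Hq; rewrite {1}/Lc (bigID (fun w => (pos2 w < q1)%N)) /=; congr (_ + _).
  by apply: eq_bigl => w; rewrite -andbA; congr (_ && _); lia.
by apply: eq_bigl => w; rewrite -andbA; congr (_ && _); lia.
Qed.

Lemma Lc_split q1 q2 y : valid y -> (q1 <= pos2 y < q2)%N -> Lc q1 + x y <= Lc q2.
Proof.
move=> Vy Hy; rewrite (@Lc_diff q1 q2); last lia.
rewrite lerD2l (bigD1 y) /=; last by rewrite inVH Vy; lia.
rewrite lerDl sumr_ge0 // => w /andP[/andP[Hw _] _]; exact: ltW (Hpos Hw).
Qed.

Lemma Lc_ge0 q : 0 <= Lc q.
Proof. by rewrite sumr_ge0 // => w /andP[Hw _]; exact: ltW (Hpos Hw). Qed.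

Lemma p_gt0 i : 0 < p i.
Proof. by apply: Hpos; rewrite inVH. Qed.

Lemma top_level : TT - Lc (2 * n) = p n.
Proof.
have H : Lc (2 * n).+1 = TT.
  by rewrite /Lc /TT; apply: eq_bigl => w; rewrite inVH; case Vw: (valid w) => //=;
     have := pos2_valid Vw; lia.
rewrite -H lev (bigD1 (u n)) /=; last by rewrite inVH /= inordK //; lia.
rewrite big1 ?addr0 // => w /andP[/andP[Hw Hp] Hne].
move: Hw Hp Hne; rewrite inVH.
case: w => [[i|[i j]]|[[[i a] b]|w]] /= Vw Hp; try lia.
- have -> : i = inord n :> 'I_n.+1 by apply: val_inj; rewrite /= inordK; lia.
  by rewrite eqxx.
- by case/and3P: Vw; lia.
Qed.

Lemma rho_gt0 : 0 < rho.
Proof.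
have H := Heig (v := u 0) ltac:(by rewrite inVH).
have : 0 < \sum_(w in VH) (d (u 0) w)%:R * x w.
  rewrite (bigD1 (u 1)) /=; last by rewrite inVH.
  have [_ D1] := d_uu (m := 1) ltac:(lia).
  rewrite D1 mul1r; apply: ltr_pwDl; first exact: p_gt0.
  rewrite sumr_ge0 // => w /andP[Hw _]; apply: mulr_ge0; [exact: ler0n| exact: ltW (Hpos Hw)].
rewrite H => Hp; have := p_gt0 0; rewrite /p => Hx.
by move: Hp; rewrite pmulr_lgt0.
Qed.

Lemma EF3 i j : (i < n)%N -> (rho + 1) * x (inner i j) = rho * p i + Lc (2 * i).+1.
Proof.
move=> Hi.
have E := @eig_nat (inner i j) (u i) (fun w => (w == inner i j) : nat)
   (fun w => (pos2 w < (2 * i).+1)%N : nat) (valid_inner _ Hi) (valid_u _).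
rewrite !sum_ind sum_pred1 ?valid_inner // -/(Lc _) in E.
rewrite mulrDl mul1r /p; apply: E => w Vw.
have Hm : (0 < i.+1 <= n)%N by lia.
have [D1 D2] := d_uu' Hi.
have [A1 A2 A3 A4] := d_ui' j Hi.
have Pz : pos2 (inner i j) = (2 * i).+1 by rewrite pos2_inner //; lia.
have Pu : pos2 (u i) = (2 * i)%N by rewrite pos2_u //; lia.
have e : (2 * i.+1).-1 = (2 * i).+1 by lia.
case: (ltngtP (pos2 w) (2 * i).+1) => Hw /=.
- have -> : (w == inner i j) = false by apply/eqP => Ew; rewrite Ew Pz ltnn in Hw.
  rewrite (@dist_cutA i.+1 (inner i j) w) ?e ?Pz ?A3 ?valid_inner //=; lia.
- have -> : (w == inner i j) = false by apply/eqP => Ew; rewrite Ew Pz ltnn in Hw.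
  rewrite (@dist_cutB i.+1 (inner i j) w) ?e ?Pz ?A4 ?valid_inner //=; try lia.
  rewrite (@dist_cutB i.+1 (u i) w) ?e ?Pu ?D2 //=; lia.
- have [Hq [j' Ew]] := @odd_inner w i Vw Hw.
  have [B1 _ _ _] := d_ui' j' Hi.
  rewrite Ew B1; case: (eqVneq j' j) => [->|Hne]; first by rewrite dist0 eqxx.
  have Hne' : inner i j' != inner i j.
    by apply/eqP => /inner_inj H; rewrite H ?eqxx in Hne; lia.
  rewrite (negbTE Hne') (dist_edge (pedge_EH Hi)) //.
  + exact: pedge_inner (i.+1) j.
  + exact: pedge_inner (i.+1) j'.
  + by rewrite eq_sym.
Qed.


Lemma lev_inner i : (i < n)%N ->
  Lc (2 * i).+2 - Lc (2 * i).+1 = \sum_(j < k - 2) x (inner i j).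
Proof.
move=> Hi; rewrite lev.
transitivity (\sum_(w in [set inner i j | j : 'I_(k - 2)]) x w).
  apply: eq_bigl => w; rewrite inVH; apply/idP/imsetP.
  - by case/andP=> Vw /eqP Hw; have [_ [j ->]] := odd_inner Vw Hw; exists j.
  - by case=> j _ ->; rewrite valid_inner // pos2_inner //; lia.
rewrite big_imset //= => j j' _ _ H; apply: (@inner_inj i) H; lia.
Qed.

Lemma EF3sum i : (i < n)%N ->
  (rho + 1) * (Lc (2 * i).+2 - Lc (2 * i).+1) = (k - 2)%:R * (rho * p i + Lc (2 * i).+1).
Proof.
move=> Hi; rewrite lev_inner // mulr_sumr.
under eq_bigr => j _ do rewrite EF3 //.
by rewrite sumr_const card_ord mulr_natl.
Qed.

Lemma leaf_inj i a b b' : (i <= n)%N -> leaf i a b = leaf i a b' -> b = b'.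
Proof. by move=> Hi [->]. Qed.

Lemma EF2 i a b0 : star_ok s t i ->
  rho * x (leaf i a b0) + (\sum_(w in VH | [exists b, w == leaf i a b]) x w + x (leaf i a b0))
  = rho * p i + TT.
Proof.
move=> Hok; have Hi : (i < n)%N by move: Hok; rewrite /star_ok; lia.
have Hi' : (i <= n)%N by lia.
have E := @eig_nat (leaf i a b0) (u i)
   (fun w => (([exists b, w == leaf i a b] : nat) + (w == leaf i a b0))%N)
   (fun w => 1%N) (valid_leaf _ _ Hok) (valid_u _).
have He := sedge_EH' a Hok.
have Hl : forall b, leaf i a b \in sedge (inord i) a by move=> b; exact: leaf_in.
have Hu := u_in_sedge a Hi'.
have Dlu : forall b, d (leaf i a b) (u i) = 1%N by move=> b; apply: (dist_edge He).
have Dul : forall b, d (u i) (leaf i a b) = 1%N by move=> b; apply: (dist_edge He).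
have E2 : rho * x (leaf i a b0) +
   \sum_(w in VH) ((([exists b, w == leaf i a b] : nat) + (w == leaf i a b0))%N)%:R * x w =
   rho * x (u i) + \sum_(w in VH) (1%N)%:R * x w.
  apply: E => w Vw; case Hx: [exists b, w == leaf i a b].
  - case/existsP: Hx => b /eqP ->; rewrite Dul.
    case: (eqVneq b b0) => [->|Hne]; first by rewrite dist0 eqxx.
    have Hne' : leaf i a b != leaf i a b0 by apply/eqP => /leaf_inj H; rewrite H // eqxx in Hne.
    rewrite (negbTE Hne') (dist_edge He) //; by rewrite eq_sym.
  - have -> : (w == leaf i a b0) = false.
      by apply/eqP => Ew; move: Hx; rewrite Ew; case/existsP; exists b0.
    rewrite (@dist_cut _ EH (fun y => [exists b, y == leaf i a b]) (u i)) //.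
    + by rewrite Dlu; lia.
    + exact: cutL.
    + by apply/existsP; exists b0.
    + by rewrite Hx.
    + exact: conn_nstep (valid_leaf _ _ Hok) (valid_u _).
    + exact: conn_nstep.
have H1 : \sum_(w in VH) (1%N)%:R * x w = TT by apply: eq_bigr => w _; rewrite mul1r.
rewrite H1 in E2; rewrite /p -E2.
rewrite -[X in _ + (_ + X) = _](sum_pred1 (valid_leaf _ _ Hok)) -!sum_ind -big_split.
by congr (_ + _); apply: eq_bigr => w _; rewrite natrD mulrDl.
Qed.


Lemma sum_leaf i a : star_ok s t i ->
  \sum_(w in VH | [exists b, w == leaf i a b]) x w = \sum_(b < k - 1) x (leaf i a b).
Proof.
move=> Hok; have Hi : (i <= n)%N by move: Hok; rewrite /star_ok; lia.
transitivity (\sum_(w in [set leaf i a b | b : 'I_(k - 1)]) x w).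
  apply: eq_bigl => w; rewrite inVH; apply/andP/imsetP.
  - by case=> _ /existsP[b /eqP ->]; exists b.
  - by case=> b _ ->; split; [exact: valid_leaf | apply/existsP; exists b].
rewrite big_imset //= => b b' _ _ H; apply: (@leaf_inj i a) H; lia.
Qed.

Lemma EF2sum i a : star_ok s t i ->
  (rho + k%:R) * \sum_(b < k - 1) x (leaf i a b) = (k - 1)%:R * (rho * p i + TT).
Proof.
move=> Hok.
have H : \sum_(b0 < k - 1) (rho * x (leaf i a b0) +
     (\sum_(w in VH | [exists b, w == leaf i a b]) x w + x (leaf i a b0)))
   = \sum_(b0 < k - 1) (rho * p i + TT) by apply: eq_bigr => b0 _; exact: EF2.
rewrite sumr_const card_ord !big_split /= -mulr_sumr sumr_const card_ord sum_leaf // in H.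
have -> : k%:R = (k - 1)%:R + 1 :> R by rewrite natr1; congr (_%:R); lia.
rewrite -[_ *+ (k - 1)]mulr_natl -[(rho * p i + TT) *+ (k - 1)]mulr_natl in H; rewrite -H.
set S := \sum_(b < k - 1) x (leaf i a b); set K1 := (k - 1)%:R.
by rewrite !mulrDl mul1r.
Qed.

Lemma lev_even i : star_ok s t i ->
  Lc (2 * i).+1 - Lc (2 * i) = p i + \sum_(a < c) \sum_(b < k - 1) x (leaf i a b).
Proof.
move=> Hok; have Hi : (0 < i < n)%N by move: Hok; rewrite /star_ok; lia.
have Hni : i != s by move: Hok; rewrite /star_ok; case/and3P.
rewrite lev (bigD1 (u i)) /=; last by rewrite inVH /= inordK //; lia.
congr (_ + _); rewrite pair_big /=.
transitivity (\sum_(w in [set leaf i ab.1 ab.2 | ab : 'I_c * 'I_(k - 1)]) x w).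
  apply: eq_bigl => w; rewrite inVH; apply/idP/imsetP.
  - case/andP => /andP[Vw /eqP Hw] Hne; move: Vw Hw Hne.
    case: w => [[j|[j l]]|[[[j a] b]|w]] /= Vw Hw Hne; try lia.
    + move: Hne; have -> : j = inord i :> 'I_n.+1 by apply: val_inj; rewrite /= inordK; lia.
      by rewrite eqxx.
    + exists (a, b) => //=; rewrite /leaf.
      by have -> : j = inord i :> 'I_n.+1 by apply: val_inj; rewrite /= inordK; lia.
  - case=> [[a b]] _ -> /=; rewrite inordK; last lia.
    by apply/andP; split; [rewrite Hok; lia|].
rewrite big_imset //= => [[a b] [a' b']] _ _ [] /= Ha Hb.
by rewrite Ha Hb.
Qed.


Lemma final :
  sigma x (Vdown' k c s t EG r s.+1) + x (u s.+1) < sigma x (Vup' k c s t EG r s) + x (u s)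
  /\ sigma x (Vdown' k c s t EG r s) <= sigma x (Vup' k c s t EG r s).
Proof.
have Hr := rho_gt0.
set K : R := (k - 2)%:R.
have HK : 0 <= K by exact: ler0n.
have HD : 0 < rho + k%:R by have := ler0n R k; lra.
set C : R := c%:R * (k - 1)%:R / (rho + k%:R).
have HC : 0 <= C by apply: divr_ge0; [apply: mulr_ge0; exact: ler0n | lra].
have Hlev : forall i, star_ok s t i -> Lc (2 * i).+1 - Lc (2 * i) = p i + C * (rho * p i + TT).
  move=> i Hok; rewrite lev_even //; congr (_ + _).
  by apply: (@sumS _ c _ (rho + k%:R) (k - 1)%:R) => // a; exact: EF2sum.
have Hmu : 0 <= 1 + C * rho by have := mulr_ge0 HC (ltW Hr); lra.
have Hsok : forall i, (0 < i < n)%N -> i != s -> star_ok s t i.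
  by move=> i Hi Hne; rewrite /star_ok; apply/and3P; split => //; lia.
have Delta : TT - Lc (2 * s).+1 <= Lc (2 * s).
  apply: (@core _ s t rho TT K (1 + C * rho) Lc p) => //; try lia.
  - exact: EF1.
  - move=> m Hm; apply: inner_sym (EF1 Hm) _.
    have := @EF3sum m.-1 ltac:(lia).
    have -> : (2 * m.-1).+2 = (2 * m)%N by lia.
    have -> : (2 * m.-1).+1 = (2 * m).-1 by lia.
    by [].
  - move=> j Hj; apply: lev_diff; apply: Hlev; apply: Hsok; lia.
  - have := @Lc_split 0 (2 * (s - t)).+1 (u (s - t)) (valid_u _).
    rewrite pos2_u; last lia.
    have H' : (0 <= 2 * (s - t) < (2 * (s - t)).+1)%N by lia.
    move=> H; have := H H'; have := Lc_ge0 0; rewrite /p; lra.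
  - by have := top_level.
have E1 : sigma x (Vup' k c s t EG r s) = Lc (2 * s).
  by rewrite /sigma Vup_eq /Lc; apply: eq_bigl => w; rewrite !inE.
have E2 : sigma x (Vdown' k c s t EG r s) = TT - Lc (2 * s).+1.
  by rewrite /sigma Vdown_eq -sum_gt; apply: eq_bigl => w; rewrite !inE.
have E3 : sigma x (Vdown' k c s t EG r s.+1) = TT - Lc (2 * s.+1).+1.
  by rewrite /sigma Vdown1_eq -sum_gt; apply: eq_bigl => w; rewrite !inE.
rewrite E1 E2 E3; split => //.
have := @Lc_split (2 * s).+1 (2 * s.+1).+1 (u s.+1) (valid_u _).
rewrite pos2_u; last lia.
have H' : ((2 * s).+1 <= 2 * s.+1 < (2 * s.+1).+1)%N by lia.
move=> H; have := H H'; have := p_gt0 s; rewrite /p; lra.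
Qed.

End Eig.

End Conc.

Unset Implicit Arguments.
Local Open Scope ring_scope.

Theorem lemma6 (R : rcfType) (k c s t : nat) (W : finType)
  (EG : {set {set W}}) (r : W) (x : carrier k c s t W -> R) :
  (2 <= k)%N -> (1 <= c)%N -> (2 <= t)%N -> (t <= s)%N ->
  uniform k EG -> hconnected [set: W] EG ->
  perron_vector (VH k c s t r) (EH k c s t EG r) x ->
  sigma x (Vup' k c s t EG r s) + x (uu k c s t W s)
    > sigma x (Vdown' k c s t EG r s.+1) + x (uu k c s t W s.+1)
  /\ sigma x (Vup' k c s t EG r s) >= sigma x (Vdown' k c s t EG r s).
Proof.
move=> hk hc ht hts _ hcon [rho [_ Heig Hpos _]].
exact: (final hk hc ht hts hcon Heig Hpos).
Qed.
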